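(* Let $d\ge1$, $N=2^d$, $Q\ge 1$, and let $\Omega=\{(x,y,m):0\le x\le 1,\ 0<m\le y\le Qm\}$. Let $B:\Omega\to\mathbb{R}$ satisfy \[ B(x,y,m)\ge \frac1N\sum_{i=1}^N B(x_i,y_i,m_i) \] whenever $(x,y,m)\in\Omega$, $(x_i,y_i,m_i)\in\Omega$ for $i=1,\dots,N$, $\frac1N\sum x_i=x$, $\frac1N\sum y_i=y$ and $\min_i m_i=m$. Then $B$ is decreasing in $m$: if $(x,y,m_1),(x,y,m_2)\in\Omega$ with $m_1\le m_2$, then $B(x,y,m_1)\ge B(x,y,m_2)$. *)

(* Defs.v *)
From mathcomp Require Import all_boot all_order all_algebra.
From mathcomp Require Import reals.
Set Implicit Arguments. Unset Strict Implicit. Unset Printing Implicit Defensive.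
Import Order.TTheory GRing.Theory Num.Theory.
Local Open Scope ring_scope.

Definition inOmega (R : realType) (Q x y m : R) : Prop :=
  0 <= x /\ x <= 1 /\ 0 < m /\ m <= y /\ y <= Q * m.

Definition is_min_fam (R : realType) (N : nat) (ms : 'I_N -> R) (m : R) : Prop :=
  (forall i, m <= ms i) /\ (exists i, ms i = m).

(* Main.v *)
Require Import Defs.
From mathcomp Require Import all_boot all_order all_algebra.
From mathcomp Require Import reals.
From mathcomp Require Import lra.
Import Order.TTheory GRing.Theory Num.Theory.
Local Open Scope ring_scope.

Theorem mainTheorem4 (R : realType) (d : nat) (Q : R) (B : R -> R -> R -> R) :
  (1 <= d)%N -> 1 <= Q ->
  (forall (x y m : R) (xs ys ms : 'I_(2 ^ d) -> R),
      inOmega Q x y m ->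
      (forall i, inOmega Q (xs i) (ys i) (ms i)) ->
      (2 ^ d)%:R^-1 * \sum_(i < 2 ^ d) xs i = x ->
      (2 ^ d)%:R^-1 * \sum_(i < 2 ^ d) ys i = y ->
      is_min_fam ms m ->
      (2 ^ d)%:R^-1 * \sum_(i < 2 ^ d) B (xs i) (ys i) (ms i) <= B x y m) ->
  forall x y m1 m2 : R,
    inOmega Q x y m1 -> inOmega Q x y m2 -> m1 <= m2 ->
    B x y m2 <= B x y m1.
Proof.
move=> hd hQ H x y m1 m2 h1 h2 hm.
have N0 : (0 < 2 ^ d)%N by rewrite expn_gt0.
have N2 : (2 <= 2 ^ d)%N.
  by rewrite -{1}(expn1 2) leq_exp2l.
set N := (2 ^ d)%N in N0 N2 H *.
pose i0 : 'I_N := Ordinal N0.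
pose ms := fun i : 'I_N => if i == i0 then m1 else m2.
have NR : 0 < (N%:R : R) by rewrite ltr0n.
have Hc : forall c : R, N%:R^-1 * \sum_(i < N) c = c.
  by move=> c; rewrite sumr_const card_ord -[c *+ N]mulr_natl mulrA mulVf ?mul1r // gt_eqF.
have := H x y m1 (fun _ => x) (fun _ => y) ms h1 _ (Hc x) (Hc y).
have Hi : forall i, inOmega Q x y (ms i) by move=> i; rewrite /ms; case: ifP.
move=> /(_ Hi) /(_ _) H'.
have Hmin : is_min_fam ms m1.
  split; first by move=> i; rewrite /ms; case: ifP.
  by exists i0; rewrite /ms eqxx.
move: (H' Hmin).
rewrite (bigD1 i0) //= {1}/ms eqxx.
have -> : \sum_(i < N | i != i0) B x y (ms i) = \sum_(i < N | i != i0) B x y m2.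
  by apply: eq_bigr => i /negbTE hi; rewrite /ms hi.
rewrite sumr_const.
have -> : #|[pred i : 'I_N | i != i0]| = N.-1.
  by rewrite cardC1 card_ord.
move=> Hle.
have NR2 : (2 : R) <= N%:R by rewrite (ler_nat R 2 N).
have : B x y m1 + B x y m2 *+ N.-1 <= N%:R * B x y m1.
  have Ninv : 0 < (N%:R : R)^-1 by rewrite invr_gt0.
  by rewrite -(ler_pM2l Ninv) mulrA mulVf ?mul1r ?gt_eqF.
rewrite -[B x y m2 *+ N.-1]mulr_natr.
have -> : (N.-1%:R : R) = N%:R - 1.
  by rewrite -[in RHS](prednK N0) -natr1; lra.
move=> h; nra.
Qed.
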